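(* There exists a chore allocation instance with two agents $N=\{1,2\}$ and two chores (with additive, nonpositive, normalized valuations $V_i(M)=-1$ and shares $s_1,s_2\in(0,1]$, $s_1+s_2=1$) such that for every allocation $\langle X_1,X_2\rangle$ of the chores there is an agent $i\in\{1,2\}$ with $V_i(X_i)\le \frac{4}{3}\mathsf{WMMS}_i$. In other words, no algorithm can guarantee every agent $i$ a value strictly larger than $\frac43\mathsf{WMMS}_i$; any algorithm has approximation ratio at least $\frac43$ for WMMS fairness.
   Context: A chore allocation instance consists of agents $N=\{1,\dots,n\}$, chores $M$, additive valuations $V_i$ with $V_i(\{j\})\le 0$, $V_i(M)=-1$, and shares $s_i\in(0,1]$ summing to $1$. An allocation is an ordered partition $\langle X_1,\dots,X_n\rangle$ of $M$ (bundles possibly empty). The weighted maxmin share is $\mathsf{WMMS}_i:=\max_{\langle Y_1,\dots,Y_n\rangle}\min_{k\in N}V_i(Y_k)\frac{s_i}{s_k}$, the maximum over all allocations. For $\alpha\ge1$, an allocation is $\alpha$-WMMS if $V_i(X_i)\ge\alpha\,\mathsf{WMMS}_i$ for all $i$. *)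

(* Defs.v *)
From HB Require Import structures.
From mathcomp Require Import all_boot all_order all_algebra.
From mathcomp Require Import reals.
Set Implicit Arguments. Unset Strict Implicit. Unset Printing Implicit Defensive.
Import Order.TTheory GRing.Theory Num.Theory.
Local Open Scope ring_scope.

(* Agents are 'I_n.+1, chores a finType M.  An allocation (ordered partition
   <X_1,...,X_n> of M, bundles possibly empty) is a function assigning each
   chore to an agent: X k = [set j | X j == k]. *)

Section ChoreDefs.
Variables (R : realType) (n : nat) (M : finType).

Definition bundle_val (vi : M -> R) (X : {ffun M -> 'I_n.+1}) (k : 'I_n.+1) : R :=
  \sum_(j | X j == k) vi j.

(* min_k V_i(Y_k) * s_i / s_k  (min over a nonempty finite set; the seed is
   one of the members, so this is the exact minimum) *)
Definition wmms_min (v : 'I_n.+1 -> M -> R) (s : 'I_n.+1 -> R) (i : 'I_n.+1)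
    (Y : {ffun M -> 'I_n.+1}) : R :=
  \big[Num.min/ bundle_val (v i) Y ord0 * s i / s ord0]_(k : 'I_n.+1)
     (bundle_val (v i) Y k * s i / s k).

(* WMMS_i = max over all allocations Y of min_k V_i(Y_k) s_i / s_k
   (again the seed is a member of the maximised family) *)
Definition WMMS (v : 'I_n.+1 -> M -> R) (s : 'I_n.+1 -> R) (i : 'I_n.+1) : R :=
  \big[Num.max/ wmms_min v s i [ffun => ord0]]_(Y : {ffun M -> 'I_n.+1})
     wmms_min v s i Y.

Definition chore_instance (v : 'I_n.+1 -> M -> R) (s : 'I_n.+1 -> R) : Prop :=
  [/\ forall i j, v i j <= 0,
      forall i, \sum_(j : M) v i j = -1,
      forall i, 0 < s i <= 1 &
      \sum_(i : 'I_n.+1) s i = 1].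

End ChoreDefs.

(* Main.v *)
Require Import Defs.
From HB Require Import structures.
From mathcomp Require Import all_boot all_order all_algebra.
From mathcomp Require Import reals.
From mathcomp Require Import lra.
Import Order.TTheory GRing.Theory Num.Theory.
Local Open Scope ring_scope.

Lemma I2 (x : 'I_2) : x = ord0 \/ x = ord_max.
Proof. case: x => [[|[|m]] Hm]; [left|right|by []]; exact: val_inj. Qed.

Lemma sum2 {R : realType} (P : pred 'I_2) (f : 'I_2 -> R) :
  \sum_(j | P j) f j = (if P ord0 then f ord0 else 0) + (if P ord_max then f ord_max else 0).
Proof. rewrite big_mkcond !big_ord_recl big_ord0 /=. have -> : lift ord0 ord0 = ord_max :> 'I_2 by apply: val_inj. congr (_ + _); exact: addr0. Qed.

Lemma min2 {R : realType} (x0 : R) (F : 'I_2 -> R) :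
  \big[Num.min/x0]_(k : 'I_2) F k = Num.min (F ord0) (Num.min (F ord_max) x0).
Proof. rewrite !big_ord_recl big_ord0. have -> : lift ord0 ord0 = ord_max :> 'I_2 by apply: val_inj. by []. Qed.

Lemma bigmax_ge {R : realType} (T : finType) (x0 : R) (F : T -> R) y :
  F y <= \big[Num.max/x0]_(i : T) F i.
Proof.
rewrite unlock /=; have : y \in index_enum T by rewrite mem_index_enum.
elim: (index_enum T) => //= a r IH; rewrite in_cons => /orP [/eqP ->|Hy].
  by rewrite le_max lexx.
by rewrite le_max IH ?orbT.
Qed.

Lemma wmms_ge {R : realType} (v : 'I_2 -> 'I_2 -> R) s i (w : R) Y :
  (forall k, w <= bundle_val (v i) Y k * s i / s k) -> w <= WMMS v s i.
Proof.
move=> H; apply: le_trans (bigmax_ge _ (wmms_min v s i [ffun => ord0]) (wmms_min v s i) Y).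
rewrite /wmms_min min2 !le_min !H.
by have := H ord0.
Qed.

Theorem lemma3 (R : realType) :
  exists (v : 'I_2 -> 'I_2 -> R) (s : 'I_2 -> R),
    chore_instance v s /\
    forall X : {ffun 'I_2 -> 'I_2},
      exists i : 'I_2, bundle_val (v i) X i <= 4 / 3 * WMMS v s i.
Proof.
pose v : 'I_2 -> 'I_2 -> R := fun i j =>
  if i == ord0 then -1/2 else if j == ord0 then -1/4 else -3/4.
pose s : 'I_2 -> R := fun i => if i == ord0 then 1/4 else 3/4.
have W0 : -1/3 <= WMMS v s ord0.
  apply: (@wmms_ge _ _ _ _ _ [ffun => ord_max]) => k; rewrite /bundle_val sum2 /v /s !ffunE.
  by case: (I2 k) => -> /=; lra.
have W1 : -3/4 <= WMMS v s ord_max.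
  apply: (@wmms_ge _ _ _ _ _ [ffun j => j]) => k; rewrite /bundle_val sum2 /v /s !ffunE.
  by case: (I2 k) => -> /=; lra.
exists v, s; split.
  split.
  - by move=> i j; rewrite /v; case: (i == ord0); case: (j == ord0); lra.
  - by move=> i; rewrite sum2 /v /=; case: (i == ord0); lra.
  - by move=> i; rewrite /s; case: (i == ord0); apply/andP; split; lra.
  - by rewrite sum2 /s /=; lra.
move=> X; rewrite /bundle_val.
have [H0|H0] := I2 (X ord0).
  exists ord0; move: W0 W1; generalize (WMMS v s ord0) (WMMS v s ord_max) => w0 w1 W0 W1; rewrite sum2 /v H0 /=; case: (I2 (X ord_max)) => ->/=; lra.
have [H1|H1] := I2 (X ord_max).
  exists ord0; move: W0 W1; generalize (WMMS v s ord0) (WMMS v s ord_max) => w0 w1 W0 W1; rewrite sum2 /v H0 H1 /=; lra.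
exists ord_max; move: W0 W1; generalize (WMMS v s ord0) (WMMS v s ord_max) => w0 w1 W0 W1; rewrite sum2 /v H0 H1 /=; lra.
Qed.
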